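(* Let $S$ be a nonempty subset of $\mathbb{Z}$ and $\mathcal{T}\subseteq\mathbb{N}$. Then for every positive integer $n<|S|$, the generalized integer $[n]_{S,\mathcal{T}}:=\dfrac{n!_{S,\mathcal{T}}}{(n-1)!_{S,\mathcal{T}}}$ is a positive integer.
   Context: $\mathbb{N}=\{0,1,2,\dots\}$. For an integer $b\ge0$ and $a\in\mathbb{Z}$ define $\operatorname{ord}_b(a):=\sup\{k\in\mathbb{N}: a\mathbb{Z}\subseteq b^k\mathbb{Z}\}$ (convention $0^0=1$); thus for $b\ge2$ it is the largest $k$ with $b^k\mid a$ ($+\infty$ for $a=0$), $\operatorname{ord}_0(a)=+\infty$ if $a=0$ and $0$ otherwise, and $\operatorname{ord}_1(a)=+\infty$. For nonempty $S\subseteq\mathbb{Z}$, a $b$-ordering of $S$ is a sequence $(a_i)_{i\ge0}$ in $S$ such that for each $i\ge1$, $a_i$ attains $\min_{a'\in S}\sum_{j=0}^{i-1}\operatorname{ord}_b(a'-a_j)$; the $b$-exponent sequence is $\alpha_k(S,b):=\sum_{j=0}^{k-1}\operatorname{ord}_b(a_k-a_j)$ for any $b$-ordering (independent of the choice). For $\mathcal{T}\subseteq\mathbb{N}$ the generalized factorial is $k!_{S,\mathcal{T}}:=\prod_{b\in\mathcal{T}}b^{\alpha_k(S,b)}$, with conventions $b^{+\infty}=0$ for $b=0$ and $b\ge2$, $1^{+\infty}=1$, and $b^0=1$ for all $b\in\mathbb{N}$. *)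

(* Defs.v *)
From Stdlib Require Import ClassicalEpsilon.
From mathcomp Require Import all_boot all_order all_algebra.
From mathcomp Require Import boolp classical_sets fsbigop.
Set Implicit Arguments. Unset Strict Implicit. Unset Printing Implicit Defensive.
Import Order.TTheory GRing.Theory Num.Theory.
Local Open Scope classical_set_scope.

(* Extended naturals N ∪ {+oo}: Some k = k, None = +oo. *)
Definition enat := option nat.
Definition addE (x y : enat) : enat :=
  match x, y with Some a, Some b => Some (a + b)%N | _, _ => None end.
Definition leE (x y : enat) : bool :=
  match x, y with
  | _, None => true
  | None, Some _ => false
  | Some a, Some b => (a <= b)%N
  end.

(* ord_b(a) = sup {k : aZ ⊆ b^k Z} = sup {k : b^k | a} (with 0^0 = 1).
   This is +oo exactly when b^k | a for all k, i.e. a = 0 or b = 1;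
   otherwise every k with b^k | |a| satisfies k <= |a| (b^k <= |a| for
   b >= 2, and only k = 0 for b = 0), so the sup is a finite max. *)
Definition ordb (b : nat) (a : int) : enat :=
  if (a == 0%R) || (b == 1%N) then None
  else Some (\max_(k < `|a|%N.+1 | (b ^ k %| `|a|%N)%N) (k : nat)).

Definition sumord (b : nat) (a : nat -> int) (i : nat) (x : int) : enat :=
  \big[addE/Some 0%N]_(j < i) ordb b (x - a j)%R.

Definition is_bordering (S : set int) (b : nat) (a : nat -> int) : Prop :=
  (forall i, S (a i)) /\
  (forall i, (0 < i)%N -> forall x, S x -> leE (sumord b a i (a i)) (sumord b a i x)).

(* a chosen b-ordering of S (the exponent sequence does not depend on the
   choice) *)
Definition bord (S : set int) (b : nat) : nat -> int :=
  epsilon (inhabits (fun _ : nat => 0%R)) (is_bordering S b).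

Definition alpha (S : set int) (b : nat) (k : nat) : enat :=
  sumord b (bord S b) k (bord S b k).

(* b^alpha with conventions b^{+oo} = 0 for b <> 1, 1^{+oo} = 1, 0^0 = 1 *)
Definition powE (b : nat) (e : enat) : nat :=
  match e with
  | Some k => (b ^ k)%N
  | None => if b == 1%N then 1%N else 0%N
  end.

(* k!_{S,T} = prod_{b in T} b^{alpha_k(S,b)}, a finitely supported product
   (MathComp-Analysis fsbigop: factors equal to 1 are dropped). *)
Definition gfact (S : set int) (T : set nat) (k : nat) : nat :=
  \big[muln/1%N]_(b \in T) powE b (alpha S b k).

(* Main.v *)
Require Import Defs.
From HB Require Import structures.
From Stdlib Require Import ClassicalEpsilon Classical.
From mathcomp Require Import all_boot all_order all_algebra intdiv.
From mathcomp Require Import boolp classical_sets fsbigop.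
From mathcomp Require Import zify ring.
Set Implicit Arguments. Unset Strict Implicit. Unset Printing Implicit Defensive.
Import Order.TTheory GRing.Theory Num.Theory.
Local Open Scope classical_set_scope.

Lemma addEA : associative addE.
Proof. by case=> [a|] [b|] [c|] //=; rewrite addnA. Qed.
Lemma addEC : commutative addE.
Proof. by case=> [a|] [b|] //=; rewrite addnC. Qed.
Lemma add0E : left_id (Some 0%N) addE.
Proof. by case. Qed.
HB.instance Definition _ := Monoid.isComLaw.Build enat (Some 0%N) addE addEA addEC add0E.

Lemma leE_trans x y z : leE x y -> leE y z -> leE x z.
Proof. by case: x => [a|]; case: y => [b|]; case: z => [c|] //=; apply: leq_trans. Qed.
Lemma leE_addr x y : leE x (addE x y).
Proof. by case: x => [a|]; case: y => [b|] //=; rewrite leq_addr. Qed.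
Lemma leE0 y : leE (Some 0%N) y.
Proof. by case: y. Qed.
Lemma leE_some x m : leE x (Some m) -> exists k, x = Some k.
Proof. by case: x => [a|] // _; exists a. Qed.
Lemma leE_some0 x : leE x (Some 0%N) -> x = Some 0%N.
Proof. by case: x => [a|] //=; rewrite leqn0 => /eqP->. Qed.

Lemma sumord0 b a x : sumord b a 0 x = Some 0%N.
Proof. by rewrite /sumord big_ord0. Qed.
Lemma sumordS b a k x :
  sumord b a k.+1 x = addE (sumord b a k x) (ordb b (x - a k)%R).
Proof. by rewrite /sumord big_ord_recr. Qed.

Lemma sumord_some b a k x :
  (forall j, (j < k)%N -> exists m, ordb b (x - a j)%R = Some m) ->
  exists m, sumord b a k x = Some m.
Proof.
elim: k => [|k IH] H; first by exists 0%N; rewrite sumord0.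
rewrite sumordS.
have [m1 ->] := IH (fun j hj => H j (ltnW hj)).
have [m2 E] := H k (ltnSn k).
by exists (m1 + m2)%N; rewrite E.
Qed.

Lemma sumord_zero b a k x :
  (forall j, (j < k)%N -> ordb b (x - a j)%R = Some 0%N) ->
  sumord b a k x = Some 0%N.
Proof.
elim: k => [|k IH] H; first by rewrite sumord0.
by rewrite sumordS IH ?H // => j hj; apply: H; apply: ltnW.
Qed.

Lemma ordb_some b a : b != 1%N -> a != 0%R -> exists m, ordb b a = Some m.
Proof.
move=> hb ha; rewrite /ordb (negbTE hb) (negbTE ha) /=; eexists; reflexivity.
Qed.

Lemma ordb_zero b a : b != 1%N -> ~~ (b %| `|a|%N)%N -> ordb b a = Some 0%N.
Proof.
move=> hb hd.
have ha : a != 0%R.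
  by apply: contraNneq hd => ->.
rewrite /ordb (negbTE hb) (negbTE ha) /=; congr Some; apply/eqP.
rewrite -leqn0; apply/bigmax_leqP => k hk.
case: k hk => [[|k] hk] //= hdk.
exfalso; move/negP: hd; apply.
by apply: dvdn_trans hdk; rewrite expnS dvdn_mulr.
Qed.

Lemma count_le1 (p : pred int) (s : seq int) : uniq s ->
  (forall x y, x \in s -> y \in s -> p x -> p y -> x = y) -> (count p s <= 1)%N.
Proof.
elim: s => [|x s IH] //= /andP [xs us] H.
case px: (p x) => /=.
  suff -> : count p s = 0%N by [].
  apply/eqP; rewrite -leqn0 leqNgt -has_count; apply/hasP => -[y ys py].
  have E := H x y (mem_head _ _) (mem_behead (s := x :: s) ys) px py.
  by move: xs; rewrite E ys.
by rewrite add0n; apply: IH => // u v us' vs'; apply: H; rewrite inE ?us' ?vs' orbT.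
Qed.

Lemma pigeon (s : seq int) k (R : int -> nat -> bool) : uniq s -> (k < size s)%N ->
  (forall j x y, x \in s -> y \in s -> R x j -> R y j -> x = y) ->
  exists2 x, x \in s & forall j, (j < k)%N -> ~~ R x j.
Proof.
move=> us hk H.
have cnt : forall k, (count (fun x => has (R x) (iota 0 k)) s <= k)%N.
  elim=> [|m IH].
    by rewrite (eq_count (a2 := pred0)) ?count_pred0.
  rewrite (eq_count (a2 := predU (fun x => has (R x) (iota 0 m)) (fun x => R x m))); last first.
    by move=> x; rewrite -addn1 iotaD has_cat /= orbF.
  have := count_predUI (fun x => has (R x) (iota 0 m)) (fun x => R x m) s.
  have := count_le1 us (H m).
  move=> h1 h2; set A := count _ s in IH h2; set B := count (predI _ _) s in h2; set C := count (fun x => R x m) s in h1 h2.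
  move: h2; rewrite {1}/A; lia.
have : (0 < count (predC (fun x => has (R x) (iota 0 k))) s)%N.
  have := count_predC (fun x => has (R x) (iota 0 k)) s.
  have := cnt k; lia.
rewrite -has_count => /hasP [x xs /= hx]; exists x => // j hj.
apply: contra hx => rj; apply/hasP; exists j => //; by rewrite mem_iota.
Qed.

Lemma exmin (S : set int) (f : int -> enat) : S !=set0 ->
  exists x, S x /\ forall y, S y -> leE (f x) (f y).
Proof.
move=> hS.
case: (Classical_Prop.classic (exists y, S y /\ f y <> None)).
  case=> y [Sy]; case Efy: (f y) => [m|] // _.
  elim/ltn_ind: m y Sy Efy => m IH y Sy Efy.
  case: (Classical_Prop.classic (forall z, S z -> leE (f y) (f z))) => [H|H]; first by exists y.
  have [z Hz] := not_all_ex_not _ _ H.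
  have [Sz nle] := imply_to_and _ _ Hz.
  move: nle; rewrite Efy; case Efz: (f z) => [m'|] //= /negP; rewrite -ltnNge => lt.
  exact: IH lt z Sz Efz.
move=> H; case: hS => x Sx; exists x; split => // y Sy.
have N : forall z, S z -> f z = None.
  move=> z Sz; case E: (f z) => [m|] //; exfalso; apply: H; exists z; by rewrite E.
by rewrite !N.
Qed.

Definition cost b (l : seq int) (x : int) : enat :=
  \big[addE/Some 0%N]_(j < size l) ordb b (x - nth 0%R l j)%R.
Definition gstep (S : set int) b (l : seq int) : int :=
  epsilon (inhabits 0%R) (fun x => S x /\ forall y, S y -> leE (cost b l x) (cost b l y)).
Fixpoint build (S : set int) b m : seq int :=
  if m is m'.+1 then rcons (build S b m') (gstep S b (build S b m')) else [::].
Definition aseq S b i := nth 0%R (build S b i.+1) i.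

Lemma size_build S b m : size (build S b m) = m.
Proof. by elim: m => //= m IH; rewrite size_rcons IH. Qed.

Lemma nth_build S b m d j : (j < m)%N ->
  nth 0%R (build S b (m + d)) j = nth 0%R (build S b m) j.
Proof.
move=> hj; elim: d => [|d IH]; first by rewrite addn0.
by rewrite addnS /= nth_rcons size_build (ltn_addr _ hj).
Qed.

Lemma aseq_nth S b i j : (j < i)%N -> aseq S b j = nth 0%R (build S b i) j.
Proof. by move=> hj; rewrite /aseq -(subnKC hj) nth_build. Qed.

Lemma aseq_g S b i : aseq S b i = gstep S b (build S b i).
Proof. by rewrite /aseq /= nth_rcons size_build ltnn eqxx. Qed.

Lemma sumord_cost S b i x : sumord b (aseq S b) i x = cost b (build S b i) x.
Proof.
rewrite /sumord /cost.
have hl := size_build S b i.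
have ha : forall j, (j < i)%N -> aseq S b j = nth 0%R (build S b i) j.
  by move=> j; apply: aseq_nth.
move: (build S b i) hl ha => l hl ha.
rewrite hl; apply: eq_bigr => j _; by rewrite ha.
Qed.

Lemma bordering_exists S b : S !=set0 -> is_bordering S b (aseq S b).
Proof.
move=> hS.
have spec i := epsilon_spec (inhabits 0%R) _ (exmin (cost b (build S b i)) hS).
split.
  by move=> i; rewrite aseq_g; case: (spec i).
move=> i hi x Sx; rewrite !sumord_cost aseq_g.
by case: (spec i) => _ H; apply: H.
Qed.

Lemma bord_spec S b : S !=set0 -> is_bordering S b (bord S b).
Proof.
move=> hS; rewrite /bord; apply: epsilon_spec.
by exists (aseq S b); apply: bordering_exists.
Qed.

Lemma alpha_le_cand S b k x : S !=set0 -> S x ->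
  leE (alpha S b k) (sumord b (bord S b) k x).
Proof.
move=> hS Sx; case: k => [|k]; first by rewrite /alpha !sumord0.
by have [_ H] := bord_spec b hS; apply: H.
Qed.

Lemma alpha_mono S b n : S !=set0 -> (0 < n)%N -> leE (alpha S b n.-1) (alpha S b n).
Proof.
move=> hS; case: n => [|m] //= _.
apply: leE_trans (alpha_le_cand b m hS (proj1 (bord_spec b hS) m.+1)) _.
by rewrite /alpha sumordS; apply: leE_addr.
Qed.

Lemma alpha_fin S b k (s : seq int) : S !=set0 -> uniq s -> (k < size s)%N ->
  (forall x, x \in s -> S x) -> b != 1%N -> exists m, alpha S b k = Some m.
Proof.
move=> hS us hk sS hb.
have [x xs hx] := pigeon (R := fun x j => x == bord S b j) us hk
  (fun j x y _ _ (h1 : x == bord S b j) (h2 : y == bord S b j) => etrans (eqP h1) (esym (eqP h2))).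
have [m hm] : exists m, sumord b (bord S b) k x = Some m.
  apply: sumord_some => j hj; apply: ordb_some => //.
  by rewrite subr_eq0; apply: hx.
have := alpha_le_cand b k hS (sS x xs); rewrite hm; exact: leE_some.
Qed.

Lemma alpha_zero S b k (s : seq int) D : S !=set0 -> uniq s -> (k < size s)%N ->
  (forall x, x \in s -> S x) -> b != 1%N -> (b == 0%N) || (D < b)%N ->
  (forall x y, x \in s -> y \in s -> (absz (x - y)%R <= D)%N) ->
  alpha S b k = Some 0%N.
Proof.
move=> hS us hk sS hb hbD hD.
have U : forall j x y, x \in s -> y \in s ->
    (b %| absz (x - bord S b j)%R)%N -> (b %| absz (y - bord S b j)%R)%N -> x = y.
  move=> j x y xs ys h1 h2.
  have h3 : (b%:Z %| ((x - bord S b j) - (y - bord S b j))%R)%Z.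
    by apply: rpredB; rewrite dvdzE absz_nat.
  have E : ((x - bord S b j) - (y - bord S b j) = x - y)%R by ring.
  rewrite E dvdzE absz_nat in h3.
  have hxy := hD x y xs ys.
  suff : absz (x - y)%R = 0%N by move/eqP; rewrite absz_eq0 subr_eq0 => /eqP.
  case/orP: hbD => [/eqP b0|Db].
    by move: h3; rewrite b0 dvd0n => /eqP.
  apply/eqP; apply: contraLR Db; rewrite -leqNgt -lt0n => pos.
  exact: leq_trans (dvdn_leq pos h3) hxy.
have [x xs hx] := pigeon (R := fun x j => b %| absz (x - bord S b j)%R)%N us hk U.
have hm : sumord b (bord S b) k x = Some 0%N.
  by apply: sumord_zero => j hj; apply: ordb_zero => //; apply: hx.
have := alpha_le_cand b k hS (sS x xs); rewrite hm; exact: leE_some0.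
Qed.

Theorem theorem3p12 (S : set int) (T : set nat) (n : nat) :
  S !=set0 ->
  (0 < n)%N ->
  (* n < |S| : S has at least n+1 distinct elements *)
  (exists s : seq int, [/\ uniq s, size s = n.+1 & forall x, x \in s -> S x]) ->
  gfact S T n.-1 <> 0%N /\
  exists q : nat, (0 < q)%N /\ gfact S T n = (q * gfact S T n.-1)%N.
Proof.
move=> hS hn [s [us ss sS]].
set D := (2 * \max_(z <- s) absz z)%N.
have hD : forall x y, x \in s -> y \in s -> (absz (x - y)%R <= D)%N.
  move=> x y xs ys.
  have h := leqD_dist x 0 y.
  rewrite subr0 sub0r abszN in h.
  apply: leq_trans h _; rewrite /D mul2n -addnn leq_add //.
    exact: (leq_bigmax_seq (F := absz) _ xs).
  exact: (leq_bigmax_seq (F := absz) _ ys).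
have hk : forall k, (k <= n)%N -> (k < size s)%N by move=> k; rewrite ss ltnS.
pose F k b := powE b (alpha S b k).
have Fpos : forall k b, (k <= n)%N -> (0 < F k b)%N.
  move=> k b kn; rewrite /F.
  case: (eqVneq b 1%N) => [->|hb1].
    by case: (alpha S 1 k) => [m|] //=; rewrite exp1n.
  case: (eqVneq b 0%N) => [b0|hb0].
    by rewrite (alpha_zero (s := s) (D := D) hS us (hk k kn) sS hb1) ?b0.
  have [m ->] := alpha_fin hS us (hk k kn) sS hb1.
  by rewrite /= expn_gt0 lt0n hb0.
have F1 : forall k b, (k <= n)%N -> (D < b)%N -> F k b = 1%N.
  move=> k b kn Db; rewrite /F.
  case: (eqVneq b 1%N) => [->|hb1].
    by case: (alpha S 1 k) => [m|] //=; rewrite exp1n.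
  by rewrite (alpha_zero (s := s) (D := D) hS us (hk k kn) sS hb1) ?Db ?orbT.
have Fdvd : forall b, (F n.-1 b %| F n b)%N.
  move=> b; rewrite /F.
  case: (eqVneq b 1%N) => [->|hb1].
    by case: (alpha S 1 n.-1) => [m|] //=; case: (alpha S 1 n) => [m'|] //=; rewrite !exp1n.
  have [m1 E1] := alpha_fin hS us (hk n.-1 (leq_pred n)) sS hb1.
  have [m2 E2] := alpha_fin hS us (hk n (leqnn n)) sS hb1.
  have := alpha_mono b hS hn; rewrite E1 E2 /= => h.
  exact: dvdn_exp2l.
pose r := [seq b <- iota 0 D.+1 | b \in T].
have G : forall k, (k <= n)%N -> gfact S T k = \big[muln/1%N]_(b <- r | b \in T) F k b.
  move=> k kn; rewrite /gfact (fsbigE r).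
  - by [].
  - by rewrite filter_uniq // iota_uniq.
  - by move=> x /=; rewrite mem_filter => /andP [h _]; rewrite -in_setE.
  move=> i Ti; rewrite mem_filter (mem_set Ti) /=.
  rewrite -[0 :: iota 1 D]/(iota 0 D.+1) mem_iota add0n ltnS -ltnNge => Di.
  exact: F1.
have Gn1 := G n.-1 (leq_pred n).
have Gn := G n (leqnn n).
split.
  rewrite Gn1 => /eqP; apply/negP; rewrite -lt0n.
  by apply: prodn_gt0 => b; apply: Fpos; apply: leq_pred.
exists (\big[muln/1%N]_(b <- r | b \in T) (F n b %/ F n.-1 b)); split.
  apply: prodn_gt0 => b; rewrite divn_gt0 ?Fpos ?leq_pred //.
  by apply: dvdn_leq; [apply: Fpos | apply: Fdvd].
rewrite Gn Gn1 -big_split /=; apply: eq_bigr => b _.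
by rewrite divnK.
Qed.
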